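(* Let $\Phi=(V,C)$ be a $k$-uniform CNF formula with $n=|V|$ variables in which each variable belongs to at most $d$ clauses, and let $Z$ be its number of satisfying assignments. For $\theta\ge0$ let $Z(\theta)=\sum_{X\in\{0,1\}^V}\exp(-\theta|F(X)|)$, where $F(X)\subseteq C$ is the set of clauses not satisfied by $X$. Given $\varepsilon>0$, let $\ell=nd\left\lceil\ln\frac{4nd}{\varepsilon}\right\rceil$ and $\theta_\ell=\frac{\ell}{dn}$. If $2^k\ge 2\mathrm{e}dk$, then $$Z\le Z(\theta_\ell)\le\exp\left(\frac\varepsilon2\right)Z.$$
   Context: A CNF formula is $k$-uniform if every clause contains exactly $k$ literals on distinct variables (never both $x$ and $\neg x$). *)

(* Defs.v *)
From HB Require Import structures.
From mathcomp Require Import all_boot all_order all_algebra.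
From mathcomp Require Import all_classical all_reals all_analysis.
Set Implicit Arguments. Unset Strict Implicit. Unset Printing Implicit Defensive.
Import Order.TTheory GRing.Theory Num.Theory.
Local Open Scope ring_scope.

(* A clause over the variable set V (a finType) is a finite function
   V -> option bool: [c v = None] means v does not occur in c, and
   [c v = Some b] means the literal on v occurs with sign b
   (Some true = x_v, Some false = ~ x_v).  In particular a clause has at
   most one literal per variable (never both x and ~x). *)
Definition clause (V : finType) := {ffun V -> option bool}.

Definition cnf (V : finType) := {set clause V}.

Definition cvars (V : finType) (c : clause V) : {set V} :=
  [set v | c v != None].

Definition k_uniform (V : finType) (k : nat) (C : cnf V) : Prop :=
  forall c, c \in C -> #|cvars c| = k.

Definition max_degree_le (V : finType) (d : nat) (C : cnf V) : Prop :=
  forall v : V, (#|[set c in C | v \in cvars c]| <= d)%N.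

Definition sat_clause (V : finType) (X : {ffun V -> bool}) (c : clause V) : bool :=
  [exists v, c v == Some (X v)].

Definition unsat_clauses (V : finType) (C : cnf V) (X : {ffun V -> bool}) : {set clause V} :=
  [set c in C | ~~ sat_clause X c].

Definition nsat (V : finType) (C : cnf V) : nat :=
  #|[set X : {ffun V -> bool} | [forall c in C, sat_clause X c]]|.

Definition Ztheta (R : realType) (V : finType) (C : cnf V) (theta : R) : R :=
  \sum_(X : {ffun V -> bool}) expR (- theta * (#|unsat_clauses C X|)%:R).

(* Main.v *)
Require Import Defs.
From HB Require Import structures.
From mathcomp Require Import all_boot all_order all_algebra.
From mathcomp Require Import all_classical all_reals all_analysis.
From mathcomp Require Import ring lra.
From mathcomp Require Import ssrbool fintype bigop finset.
Import Order.TTheory GRing.Theory Num.Theory.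
Local Open Scope ring_scope.
Set Implicit Arguments. Unset Strict Implicit. Unset Printing Implicit Defensive.

Section Indep.
Variable V : finType.
Implicit Types (X g : {ffun V -> bool}) (W : {set V}).

Definition flip (w : V) X : {ffun V -> bool} :=
  [ffun v => if v == w then ~~ X v else X v].

Lemma flipK w : involutive (flip w).
Proof.
by move=> X; apply/ffunP => v; rewrite !ffunE; case: eqP => // _; rewrite negbK.
Qed.

Lemma indep_count (P : pred {ffun V -> bool}) g W :
  (forall w X, w \in W -> P (flip w X) = P X) ->
  (2 ^ #|W| * #|[set X | P X && [forall v in W, X v == g v]]| =
   #|[set X | P X]|)%N.
Proof.
move Hm: #|W| => m; elim: m W Hm P => [|m IH] W Hm P HP.
  rewrite mul1n; apply: eq_card => X; rewrite !inE; case: (P X) => //=.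
  apply/forallP => v; apply/implyP => vW; exfalso.
  by move: Hm; rewrite (cardsD1 v W) vW.
have /card_gt0P [w wW] : (0 < #|W|)%N by rewrite Hm.
have HW' : #|W :\ w| = m by move: Hm; rewrite (cardsD1 w W) wW => -[].
set P' := fun X => P X && (X w == g w).
have HP' : forall w' X, w' \in W :\ w -> P' (flip w' X) = P' X.
  move=> w' X; rewrite !inE => /andP [nw w'W]; rewrite /P' HP //.
  by rewrite ffunE (eq_sym w w') (negbTE nw).
have E1 : [set X | P X && [forall v in W, X v == g v]] =
          [set X | P' X && [forall v in W :\ w, X v == g v]].
  apply/setP => X; rewrite !inE /P'; case: (P X) => //=.
  apply/forallP/andP.
    move=> H; split; first by move: (H w); rewrite wW.
    by apply/forallP => v; apply/implyP; rewrite !inE => /andP [_ vW]; move: (H v); rewrite vW.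
  move=> [Hw /forallP H] v; apply/implyP => vW.
  case: (eqVneq v w) => [->//|nvw]; move: (H v); rewrite !inE nvw vW //.
rewrite E1 -(IH _ HW' P); last first.
  by move=> w' X; rewrite !inE => /andP [_ ?]; apply: HP.
rewrite expnS -mulnA mulnCA; congr (_ * _)%N.
set A := [set X | P' X && _].
set B := [set X | P X && _].
have -> : B = A :|: flip w @: A.
  apply/setP => X; rewrite !inE; apply/idP/orP.
    move=> /andP [PX HX]; case: (eqVneq (X w) (g w)) => Xw.
      by left; rewrite /P' PX Xw eqxx HX.
    right; apply/imsetP; exists (flip w X); last by rewrite flipK.
    rewrite inE /P' HP // PX ffunE eqxx /=.
    have -> : (~~ X w == g w) by move: Xw; case: (X w); case: (g w).
    rewrite /=; apply/forallP => v; apply/implyP.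
    by rewrite !inE => /andP [nvw vW]; rewrite ffunE (negbTE nvw); move/forallP: HX => /(_ v); rewrite !inE nvw vW.
  case=> [|/imsetP [Y]]; first by rewrite /P' => /andP [/andP [-> _] ->].
  rewrite inE /P' => /andP [/andP [PY _] HY] ->; rewrite HP // PY /=.
  apply/forallP => v; apply/implyP; rewrite !inE => /andP [nvw vW].
  by rewrite ffunE (negbTE nvw); move/forallP: HY => /(_ v); rewrite !inE nvw vW.
rewrite cardsU card_imset; last exact: (can_inj (flipK w)).
have -> : #|A :&: flip w @: A| = 0%N.
  apply/eqP; rewrite cards_eq0; apply/eqP/setP => X; rewrite !inE; apply/negP => /andP [/andP [/andP [_ Xw] _] /imsetP [Y]].
  rewrite inE /P' => /andP [/andP [_ /eqP Yw] _] XY.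
  by move: Xw; rewrite XY ffunE eqxx -Yw; case: (Y w).
by rewrite subn0 mul2n addnn.
Qed.
End Indep.

Section Clauses.
Variable V : finType.
Implicit Types (X : {ffun V -> bool}) (c : clause V) (T : {set clause V}).

Definition satT T X := [forall c in T, sat_clause X c].
Definition GT T : nat := #|[set X | satT T X]|.
Definition pat c : {ffun V -> bool} := [ffun v => if c v is Some b then ~~ b else false].

Lemma sat_flip c w X : c w = None -> sat_clause (flip w X) c = sat_clause X c.
Proof.
move=> cw; apply/existsP/existsP => -[v /eqP Hv]; exists v; apply/eqP.
  by move: Hv; rewrite ffunE; case: eqP => // ->; rewrite cw.
by rewrite ffunE; case: eqP => // vw; move: Hv; rewrite vw cw.
Qed.

Lemma unsat_pat c X : ~~ sat_clause X c = [forall v in cvars c, X v == pat c v].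
Proof.
rewrite /sat_clause negb_exists; apply/forallP/forallP => H v; move: (H v);
  rewrite /cvars !inE ffunE; case: (c v) => [b|] //=.
  by case: (X v); case: b.
by case: (X v); case: b.
Qed.

Lemma indep T c : (forall c', c' \in T -> [disjoint cvars c' & cvars c]) ->
  (2 ^ #|cvars c| * #|[set X | satT T X && ~~ sat_clause X c]| = GT T)%N.
Proof.
move=> Hd; rewrite /GT -(@indep_count _ (satT T) (pat c) (cvars c)).
  by congr (_ * _)%N; apply: eq_card => X; rewrite !inE unsat_pat.
move=> w X wc; apply/forallP/forallP => H c'; move: (H c');
  case Hc': (c' \in T) => //=; rewrite sat_flip //;
  have := disjointFl (Hd _ Hc') wc; rewrite inE;
  by move/negbFE/eqP.
Qed.

Lemma satT_U1 c T X : satT (c |: T) X = sat_clause X c && satT T X.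
Proof.
apply/forallP/andP => [H|[H1 /forallP H2] c'].
  split; first by move: (H c); rewrite setU11.
  by apply/forallP => c'; apply/implyP => Hc'; move: (H c'); rewrite inE Hc' orbT.
apply/implyP; rewrite !inE => /orP [/eqP ->|Hc] //; exact: (implyP (H2 c') Hc).
Qed.

Lemma GT_split c T : (GT T = GT (c |: T) + #|[set X | satT T X && ~~ sat_clause X c]|)%N.
Proof.
rewrite /GT -(cardsID [set X | sat_clause X c]); congr (_ + _)%N; apply: eq_card => X;
  by rewrite !inE ?satT_U1 andbC.
Qed.

End Clauses.

Lemma bern (R : realType) (y : R) (m : nat) : 0 <= y -> y <= 1 ->
  1 - m%:R * y <= (1 - y) ^+ m.
Proof.
move=> y0 y1; elim: m => [|m IH]; first by rewrite mul0r subr0 expr0.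
rewrite exprS.
have h1 : (1 - y) * (1 - m%:R * y) <= (1 - y) * (1 - y) ^+ m.
  by apply: ler_wpM2l => //; rewrite subr_ge0.
apply: le_trans h1; rewrite -natr1.
have : 0 <= m%:R * y * y by rewrite mulr_ge0 // mulr_ge0.
lra.
Qed.

Section LLL.
Variables (R : realType) (V : finType) (C : cnf V) (k d : nat).
Hypothesis Hk : (0 < k)%N.
Hypothesis Hu : k_uniform k C.
Hypothesis Hdeg : max_degree_le d C.
Hypothesis H4 : (4 * k * d <= 2 ^ k)%N.
Hypothesis Hd : (0 < d)%N.
Implicit Types (X : {ffun V -> bool}) (c : clause V) (T : {set clause V}).

Lemma count_le (A : {set clause V}) (B : {set V}) : A \subset C ->
  (forall c, c \in A -> exists2 v, v \in B & v \in cvars c) -> (#|A| <= #|B| * d)%N.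
Proof.
move=> AC HA.
apply: (@leq_trans (\sum_(c in A) \sum_(v in B) (v \in cvars c : nat))).
  rewrite -sum1_card; apply: leq_sum => c cA; have [v vB vc] := HA c cA.
  by rewrite (bigD1 v) //= vc.
rewrite exchange_big /= -sum_nat_const; apply: leq_sum => v vB.
rewrite -big_mkcondr /= sum1_card.
apply: leq_trans (Hdeg v); apply: subset_leq_card; apply/subsetP => c.
by rewrite unfold_in !inE => /andP [cA ->]; rewrite (subsetP AC).
Qed.

Definition xx : R := 2 / (2 ^ k)%:R.

Definition good T c :=
  (#|[set X | satT T X && ~~ sat_clause X c]|)%:R <= xx * (GT T)%:R.

Lemma K0 : 0 < (2 ^ k)%:R :> R.
Proof. by rewrite ltr0n expn_gt0. Qed.

Lemma xx_ge0 : 0 <= xx.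
Proof. by rewrite /xx divr_ge0 // ltW // K0. Qed.

Lemma kd4 : 4%:R * k%:R * d%:R <= (2 ^ k)%:R :> R.
Proof. by rewrite -!natrM ler_nat. Qed.

Lemma xx_le_half : xx <= 1 / 2.
Proof.
rewrite /xx ler_pdivrMr ?K0 //.
have h1 : 1%:R <= k%:R :> R by rewrite ler_nat.
have h2 : 1%:R <= d%:R :> R by rewrite ler_nat.
have := kd4; nra.
Qed.

Lemma iter_good (U T' : {set clause V}) :
  T' :|: U \subset C -> [disjoint T' & U] ->
  (forall T c, T \subset C -> c \in C -> c \notin T -> (#|T| < #|T' :|: U|)%N -> good T c) ->
  (1 - xx) ^+ #|U| * (GT T')%:R <= (GT (T' :|: U))%:R.
Proof.
move Hm: #|U| => m; elim: m U Hm => [|m IH] U Hm HC Hdis Hg.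
  have -> : U = set0 by apply/eqP; rewrite -cards_eq0 Hm.
  by rewrite setU0 expr0 mul1r.
have /card_gt0P [u uU] : (0 < #|U|)%N by rewrite Hm.
have HU' : #|U :\ u| = m by move: Hm; rewrite (cardsD1 u U) uU => -[].
have EU : T' :|: U = u |: (T' :|: U :\ u).
  by rewrite setUCA setD1K.
have uC : u \in C by rewrite (subsetP HC) // inE uU orbT.
have sub' : T' :|: U :\ u \subset C.
  by apply: subset_trans HC; apply: setUS; apply: subD1set.
have nu : u \notin T' :|: U :\ u by rewrite !inE negb_or (disjointFl Hdis uU) eqxx.
have lt' : (#|T' :|: U :\ u| < #|T' :|: U|)%N.
  by rewrite [in X in (_ < X)%N]EU cardsU1 nu.
have IH' := IH (U :\ u) HU' sub' (disjointWr (subD1set U u) Hdis).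
have {IH'} IH' := IH' (fun T c a b e f => Hg T c a b e (ltn_trans f lt')).
have G1 := Hg _ _ sub' uC nu lt'.
rewrite /good in G1.
have Es := GT_split u (T' :|: U :\ u).
rewrite EU; move: G1 IH'; rewrite Es natrD exprS.
have := xx_le_half; have := xx_ge0.
set a := (GT _)%:R; set b := (#|_|)%:R; set g := (GT T')%:R; set p := (1 - xx) ^+ m.
have p0 : 0 <= p by rewrite exprn_ge0 //; have := xx_le_half; lra.
move=> h0 h1 h2 h3.
have : (1 - xx) * (p * g) <= (1 - xx) * (a + b) by apply: ler_wpM2l => //; lra.
nra.
Qed.

Lemma lll_good n T c : (#|T| < n)%N -> T \subset C -> c \in C -> c \notin T -> good T c.
Proof.
elim: n T c => [//|n IH] T c HTn TC cC cT.
set T1 := [set c' in T | ~~ [disjoint cvars c' & cvars c]].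
set T2 := [set c' in T | [disjoint cvars c' & cvars c]].
have ET : T = T2 :|: T1.
  by apply/setP => c'; rewrite !inE; case: (c' \in T); case: [disjoint _ & _].
have dis : [disjoint T2 & T1].
  by apply/pred0P => c' /=; rewrite !inE; case: (c' \in T); case: [disjoint _ & _].
have Hit := @iter_good T1 T2.
rewrite -ET in Hit.
have {Hit} Hit := Hit TC dis (fun T' c' a b e f => IH T' c' (leq_trans f HTn) a b e).
have Hind := indep (T := T2) (c := c).
rewrite Hu // in Hind.
have {Hind} Hind : (2 ^ k * #|[set X | satT T2 X && ~~ sat_clause X c]|)%N = GT T2.
  by apply: Hind => c'; rewrite inE => /andP [].
have Hsub : (#|[set X | satT T X && ~~ sat_clause X c]| <= #|[set X | satT T2 X && ~~ sat_clause X c]|)%N.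
  apply: subset_leq_card; apply/subsetP => X; rewrite !inE => /andP [/forallP H ->].
  rewrite andbT; apply/forallP => c'; apply/implyP; rewrite inE => /andP [cT2 _].
  exact: (implyP (H c') cT2).
have HT1 : (#|T1| <= k * d)%N.
  rewrite -(Hu cC); apply: count_le.
    by apply: subset_trans TC; apply/subsetP => c'; rewrite inE => /andP [].
  move=> c'; rewrite inE => /andP [_ /pred0Pn [v /andP [H1 H2]]].
  by exists v.
have xx1 : xx <= 1 by have := xx_le_half; lra.
have B := @bern R xx #|T1| xx_ge0 xx1.
rewrite /good.
move/(congr1 (fun m => m%:R : R)): Hind; rewrite natrM => Hind.
move: Hsub; rewrite -(ler_nat R) => Hsub.
move: HT1; rewrite -(ler_nat R) natrM => HT1.
have Kp := K0.
have Kd := kd4.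
have Ht : #|T1|%:R * xx <= 1 / 2.
  rewrite /xx mulrA ler_pdivrMr //.
  have : 0 <= (#|T1|)%:R :> R by [].
  nra.
move: Hit Hind Hsub B Ht.
set N := (#|[set X | satT T X && _]|)%:R.
set N2 := (#|[set X | satT T2 X && _]|)%:R.
set G2 := (GT T2)%:R; set G := (GT T)%:R; set P := (1 - xx) ^+ _.
set t := (#|T1|)%:R.
have G20 : 0 <= G2 by [].
move=> Hit Hind Hsub B Ht.
have : G2 / 2 <= G by nra.
rewrite /xx => HG.
have HKN : (2 ^ k)%:R * N <= 2 * G.
  have : 0 <= N by [].
  nra.
rewrite mulrAC ler_pdivlMr //; lra.
Qed.

Lemma NS_bound (S : {set clause V}) : S \subset C ->
  (#|[set X | unsat_clauses C X == S]|)%:R <= 2 ^+ #|S| * (nsat C)%:R :> R.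
Proof.
move=> SC.
have E : (C :\: S) :|: S = C.
  apply/setP => c; rewrite !inE; case cS: (c \in S) => /=; last by rewrite orbF.
  by rewrite (subsetP SC).
have dis : [disjoint C :\: S & S].
  by rewrite disjoints_subset; apply/subsetP => c; rewrite !inE => /andP [].
have Hit := @iter_good S (C :\: S).
rewrite E in Hit.
have {Hit} Hit := Hit (subxx C) dis (fun T c a b e f => lll_good f a b e).
have H1 : (#|[set X | unsat_clauses C X == S]| <= GT (C :\: S))%N.
  apply: subset_leq_card; apply/subsetP => X; rewrite !inE => /eqP HS.
  apply/forallP => c; apply/implyP; rewrite !inE => /andP [cS cC].
  apply: contraR cS => ns; rewrite -HS !inE cC ns.
  done.
have Hn : nsat C = GT C by [].
rewrite Hn; move: H1; rewrite -(ler_nat R) => H1.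
have Hp : (1 / 2) ^+ #|S| <= (1 - xx) ^+ #|S|.
  apply: lerXn2r; rewrite ?nnegrE; have := xx_le_half; lra.
have Hq : 2 ^+ #|S| * (1 / 2) ^+ #|S| = 1 :> R.
  by rewrite -exprMn mulrC divfK ?expr1n // pnatr_eq0.
set G := (GT C)%:R in Hit *; set G' := (GT _)%:R in H1 Hit *.
set N := (#|_|)%:R in H1 *.
have G'0 : 0 <= G' by [].
have : (1 / 2) ^+ #|S| * G' <= G.
  apply: le_trans Hit; apply: ler_wpM2r => //.
move=> HG.
have h2 : 0 <= 2 ^+ #|S| :> R by rewrite exprn_ge0.
have : 2 ^+ #|S| * ((1 / 2) ^+ #|S| * G') <= 2 ^+ #|S| * G by apply: ler_wpM2l.
rewrite mulrA Hq mul1r => HH.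
lra.
Qed.

End LLL.

Lemma lower_bound (R : realType) (V : finType) (C : cnf V) (th : R) :
  (nsat C)%:R <= Ztheta C th.
Proof.
rewrite /nsat /Ztheta -sum1_card natr_sum big_mkcond /=.
apply: ler_sum => X _; rewrite inE; case: ifP => H; last exact: expR_ge0.
have -> : #|unsat_clauses C X| = 0%N.
  apply/eqP; rewrite cards_eq0; apply/eqP/setP => c; rewrite !inE.
  by apply/negP => /andP [cC]; move/forallP: H => /(_ c); rewrite cC /= => ->.
by rewrite mulr0 expR0.
Qed.

Lemma sum_subsets (R : realType) (T : finType) (y : R) (C : {set T}) :
  \sum_(S : {set T}) (if S \subset C then y ^+ #|S| else 0) = (1 + y) ^+ #|C|.
Proof.
have := @bigA_distr R 0 1 *%R +%R _ (fun i => if i \in C then y else 0) (fun _ => 1).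
rewrite (bigID (mem C)) /= (eq_bigr (fun _ => 1 + y)); last first.
  by move=> i ->; rewrite addrC.
rewrite [X in _ * X = _]big1 ?mulr1; last by move=> i /negbTE ->; rewrite add0r.
rewrite prodr_const => ->; apply: eq_bigr => S _.
rewrite -big_mkcond /=; case: ifP => SC.
  by rewrite (eq_bigr (fun _ => y)) ?prodr_const // => i iS; rewrite (subsetP SC).
move/negbT: SC => /subsetPn [i iS iC].
by rewrite (bigD1 i) //= (negbTE iC) mul0r.
Qed.

Lemma Ztheta_expand (R : realType) (V : finType) (C : cnf V) (th : R) :
  Ztheta C th = \sum_(S : {set clause V})
     expR (- th) ^+ #|S| * (#|[set X | unsat_clauses C X == S]|)%:R.
Proof.
rewrite /Ztheta.
rewrite (eq_bigr (fun X => \sum_(S : {set clause V}) ((S == unsat_clauses C X)%:R * expR (- th) ^+ #|S|))); last first.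
  move=> X _; rewrite (bigD1 (unsat_clauses C X)) //= eqxx mul1r big1 ?addr0 ?expRM_natr //.
  by move=> S /negbTE ->; rewrite mul0r.
rewrite exchange_big /=; apply: eq_bigr => S _.
rewrite -big_distrl /= mulrC; congr (_ * _).
rewrite -sum1_card natr_sum [RHS]big_mkcond /=; apply: eq_bigr => X _.
by rewrite !inE eq_sym; case: (_ == _).
Qed.

Theorem lemma7p2 (R : realType) (V : finType) (C : cnf V) (k d : nat) (eps : R) :
  (0 < k)%N ->
  k_uniform k C ->
  max_degree_le d C ->
  0 < eps ->
  (2 ^ k)%:R >= 2 * expR 1 * d%:R * k%:R :> R ->
  let n := #|V| in
  let ell : R := (n * d)%:R * (Num.ceil (ln (4 * (n * d)%:R / eps)))%:~R in
  let theta : R := ell / (d * n)%:R in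
  (nsat C)%:R <= Ztheta C theta /\ Ztheta C theta <= expR (eps / 2) * (nsat C)%:R.
Proof.
move=> Hk Hu Hdeg Heps H2k n ell theta; split; first exact: lower_bound.
have e2 : 2 <= expR 1 :> R by have := expR_ge1Dx (1:R); lra.
have NE : forall c, c \in C -> (0 < d)%N /\ (0 < n)%N.
  move=> c cC; have := Hu c cC => Hc.
  have /card_gt0P [v vc] : (0 < #|cvars c|)%N by rewrite Hc.
  split; last by apply/card_gt0P; exists v.
  apply: leq_trans (Hdeg v); apply/card_gt0P; exists c; rewrite inE cC vc.
  done.
have NB : forall S : {set clause V}, S \subset C ->
    (#|[set X | unsat_clauses C X == S]|)%:R <= 2 ^+ #|S| * (nsat C)%:R :> R.
  case: (set_0Vmem C) => [C0 | [c cC]] S SC.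
    have S0 : S = set0 by apply/eqP; rewrite -subset0 -C0.
    subst S; rewrite cards0 expr0 mul1r ler_nat; apply: subset_leq_card.
    apply/subsetP => X; rewrite !inE => /eqP HF; apply/forallP => c; apply/implyP => cC.
    apply: contraT => ns.
    have : c \in unsat_clauses C X by rewrite inE cC ns.
    by rewrite HF inE.
  have [d0 _] := NE c cC.
  apply: (NS_bound R Hk Hu Hdeg) => //.
  rewrite -(ler_nat R) !natrM.
  have h : 0 <= (d%:R * k%:R : R) by rewrite mulr_ge0.
  have h' : 0 <= (expR 1 - 2) * (d%:R * k%:R : R) by rewrite mulr_ge0 // subr_ge0.
  move: H2k; rewrite natrX; nra.
set p := expR (- theta).
have p0 : 0 <= p := expR_ge0 _.
have Hpc : 2 * p * (#|C|)%:R <= eps / 2.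
  case: (set_0Vmem C) => [C0 | [c cC]].
    by rewrite C0 cards0 mulr0; apply: divr_ge0; [apply: ltW|].
  have [d0 n0] := NE c cC.
  set D := (n * d)%:R : R.
  have D0 : 0 < D by rewrite ltr0n muln_gt0 d0 n0.
  have HC : (#|C|)%:R <= D.
    rewrite ler_nat /n -cardsT; apply: count_le => //.
    move=> c' c'C; have := Hu c' c'C => Hc.
    have /card_gt0P [v vc] : (0 < #|cvars c'|)%N by rewrite Hc.
    by exists v => //; rewrite in_setT.
  have Eth : theta = (Num.ceil (ln (4 * D / eps)))%:~R.
    rewrite /theta /ell -/D [(d * n)%N]mulnC -/D mulrAC divff ?mul1r //.
    by rewrite lt0r_neq0.
  have hp : p <= eps / (4 * D).
    rewrite /p Eth.
    have a0 : 0 < 4 * D / eps by rewrite divr_gt0 // mulr_gt0.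
    apply: (@le_trans _ _ (expR (- ln (4 * D / eps)))).
      by rewrite ler_expR lerN2 ceil_ge.
    by rewrite expRN lnK ?posrE // invf_div.
  have hp' : p * (4 * D) <= eps by rewrite -ler_pdivlMr // mulr_gt0.
  have : p * (#|C|)%:R <= p * D by apply: ler_wpM2l.
  lra.
rewrite Ztheta_expand.
apply: (@le_trans _ _ (\sum_(S : {set clause V})
   (if S \subset C then (2 * p) ^+ #|S| else 0) * (nsat C)%:R)).
  apply: ler_sum => S _; case: ifP => SC.
    rewrite -/p exprMn [2 ^+ _ * _]mulrC -mulrA; apply: ler_wpM2l.
      exact: exprn_ge0.
    exact: NB.
  have -> : #|[set X | unsat_clauses C X == S]| = 0%N.
    apply/eqP; rewrite cards_eq0; apply/eqP/setP => X; rewrite !inE.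
    apply/negP => /eqP HF; move/negP: SC; apply; rewrite -HF.
    by apply/subsetP => c; rewrite inE => /andP [].
  by rewrite mulr0 mul0r.
rewrite -big_distrl /= sum_subsets.
apply: ler_wpM2r => //.
apply: (@le_trans _ _ (expR (2 * p) ^+ #|C|)).
  apply: lerXn2r; rewrite ?nnegrE ?expR_ge0 ?expR_ge1Dx //.
  by rewrite addr_ge0 // mulr_ge0.
by rewrite -expRM_natr ler_expR.
Qed.
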